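(* Let $G=\langle r_1,r_2,s_1,s_2,c\ :\ r_1r_2=r_2r_1,\ s_1s_2=s_2s_1,\ r_1s_1c=cr_1s_1=s_1cr_1,\ r_2s_2c=s_2cr_2=cr_2s_2\rangle$, let $F=\langle r',s'\rangle$ be the free group of rank $2$, and let $p_x,p_y:G\to F$ be the homomorphisms with $p_x(r_1)=r'$, $p_x(s_2)=s'$, $p_x(r_2)=p_x(s_1)=p_x(c)=1$ and $p_y(r_2)=r'$, $p_y(s_1)=s'$, $p_y(r_1)=p_y(s_2)=p_y(c)=1$. Let $H\subseteq G$ be the subgroup generated by $r_1r_2$, $s_1s_2$, $c$, and let $g=s_2cr_1s_1cr_2$. Then $p_x(g)=p_y(g)$, $g$ has infinite order in $G$, and $g^n\notin H$ for every integer $n\neq0$.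
   Context: All groups are given by generators and relations as written; $p_x$ and $p_y$ are well-defined homomorphisms on $G$. *)

(* Defs.v *)
(* Groups given by generators and
   relations are modelled as words in the generators and their inverses,
   modulo the congruence generated by free cancellation and the relations. *)
From mathcomp Require Import all_boot all_algebra.
Set Implicit Arguments. Unset Strict Implicit. Unset Printing Implicit Defensive.

(* A letter is a generator together with a flag: false = x, true = x^-1. *)
Definition letter (X : Type) := (X * bool)%type.
Definition word (X : Type) := seq (letter X).

Definition inv_letter (X : Type) (a : letter X) : letter X := (a.1, ~~ a.2).
Definition inv_word (X : Type) (w : word X) : word X := rev (map (@inv_letter X) w).

Inductive weq (X : Type) (R : word X -> word X -> Prop) : word X -> word X -> Prop :=
| weq_refl w : weq R w w
| weq_sym w1 w2 : weq R w1 w2 -> weq R w2 w1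
| weq_trans w1 w2 w3 : weq R w1 w2 -> weq R w2 w3 -> weq R w1 w3
| weq_cancel (u v : word X) (a : letter X) :
    weq R (u ++ a :: inv_letter a :: v) (u ++ v)
| weq_rel (u v l r : word X) : R l r -> weq R (u ++ l ++ v) (u ++ r ++ v).

Definition wpow (X : Type) (w : word X) (n : int) : word X :=
  match n with
  | Posz k => flatten (nseq k w)
  | Negz k => flatten (nseq k.+1 (inv_word w))
  end.

Definition map_word (X Y : Type) (f : X -> word Y) (w : word X) : word Y :=
  flatten (map (fun a : letter X => if a.2 then inv_word (f a.1) else f a.1) w).

Inductive in_subgroup (X : Type) (R : word X -> word X -> Prop)
    (S : word X -> Prop) : word X -> Prop :=
| sg_one : in_subgroup R S [::]
| sg_gen h : S h -> in_subgroup R S h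
| sg_mul u v : in_subgroup R S u -> in_subgroup R S v -> in_subgroup R S (u ++ v)
| sg_inv u : in_subgroup R S u -> in_subgroup R S (inv_word u)
| sg_eq u v : weq R u v -> in_subgroup R S u -> in_subgroup R S v.

Inductive genG := r1 | r2 | s1 | s2 | cc.
Definition gl (x : genG) : letter genG := (x, false).

Inductive G_rel : word genG -> word genG -> Prop :=
| Grel1 : G_rel [:: gl r1; gl r2] [:: gl r2; gl r1]
| Grel2 : G_rel [:: gl s1; gl s2] [:: gl s2; gl s1]
| Grel3 : G_rel [:: gl r1; gl s1; gl cc] [:: gl cc; gl r1; gl s1]
| Grel4 : G_rel [:: gl cc; gl r1; gl s1] [:: gl s1; gl cc; gl r1]
| Grel5 : G_rel [:: gl r2; gl s2; gl cc] [:: gl s2; gl cc; gl r2]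
| Grel6 : G_rel [:: gl s2; gl cc; gl r2] [:: gl cc; gl r2; gl s2].

Inductive genF := r' | s'.
Definition F_rel : word genF -> word genF -> Prop := fun _ _ => False.

Definition px (x : genG) : word genF :=
  match x with r1 => [:: (r', false)] | s2 => [:: (s', false)] | _ => [::] end.
Definition py (x : genG) : word genF :=
  match x with r2 => [:: (r', false)] | s1 => [:: (s', false)] | _ => [::] end.

Inductive H_gen : word genG -> Prop :=
| Hg1 : H_gen [:: gl r1; gl r2]
| Hg2 : H_gen [:: gl s1; gl s2]
| Hg3 : H_gen [:: gl cc].

Definition g_elt : word genG := [:: gl s2; gl cc; gl r1; gl s1; gl cc; gl r2].

(* Main.v *)
Require Import Defs.
From mathcomp Require Import all_boot all_algebra.
From mathcomp Require Import zify.
Import GRing.Theory.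
Local Open Scope ring_scope.

Definition tr (x : genG) (i : bool) : int :=
  match x with
  | r1 => if i then 0 else 1
  | r2 => if i then -1 else 0
  | cc => if i then 1 else 0
  | _ => 0
  end.
Definition sg (x : genG) (i : bool) : bool :=
  match x with cc => i | _ => ~~ i end.

Definition step (a : letter genG) (p : int * bool) : int * bool :=
  if a.2 then (p.1 - tr a.1 (sg a.1 p.2), sg a.1 p.2)
  else (p.1 + tr a.1 p.2, sg a.1 p.2).

Definition act (w : word genG) (p : int * bool) : int * bool :=
  foldl (fun q a => step a q) p w.

Lemma act_cat u v p : act (u ++ v) p = act v (act u p).
Proof. by rewrite /act foldl_cat. Qed.

Lemma sgK x i : sg x (sg x i) = i.
Proof. by case: x; case: i. Qed.

Lemma step_inv a q : step (inv_letter a) (step a q) = q.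
Proof.
case: a q => x b [y i]; rewrite /step /inv_letter /=.
case: b => /=; rewrite sgK; congr pair; lia.
Qed.

Lemma step_inv' a q : step a (step (inv_letter a) q) = q.
Proof.
have := step_inv (inv_letter a) q.
by case: a => x b; rewrite /inv_letter /= negbK.
Qed.

Lemma rel_act l r q : G_rel l r -> act l q = act r q.
Proof.
case=> /=; case: q => y [] /=; rewrite /step /=; congr pair; lia.
Qed.

Lemma weq_act u v : weq G_rel u v -> forall p, act u p = act v p.
Proof.
elim=> [w|w1 w2 _ IH|w1 w2 w3 _ IH1 _ IH2|u0 v0 a|u0 v0 l r Hr] p.
- by [].
- by rewrite IH.
- by rewrite IH1 IH2.
- by rewrite !act_cat /= step_inv.
- rewrite !act_cat; congr act; exact: rel_act.
Qed.

Lemma act_inv_word u q : act (inv_word u) (act u q) = q.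
Proof.
elim: u q => [|a u IH] q //=.
rewrite /inv_word /= rev_cons -cats1 act_cat.
rewrite -/(inv_word u) IH /= step_inv //.
Qed.

Lemma act_g x : act g_elt (x, false) = (x + 1, false).
Proof. rewrite /act /= /step /=; congr pair; lia. Qed.

Lemma act_ginv x : act (inv_word g_elt) (x, false) = (x - 1, false).
Proof. rewrite /act /= /step /=; congr pair; lia. Qed.

Lemma flat_S (w : word genG) k : flatten (nseq k.+1 w) = w ++ flatten (nseq k w).
Proof. by []. Qed.

Lemma act_pow n x : act (wpow g_elt n) (x, false) = (x + n, false).
Proof.
case: n => k.
- rewrite /wpow. elim: k x => [|k IH] x; first by rewrite addr0.
  rewrite flat_S act_cat act_g IH; congr pair; lia.
- rewrite /wpow NegzE.
  elim: k x => [|k IH] x.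
    rewrite flat_S [flatten _]/= cats0 act_ginv; congr pair; lia.
  rewrite flat_S act_cat act_ginv IH; congr pair; lia.
Qed.

Lemma sub_act w : in_subgroup G_rel H_gen w -> act w (0, false) = (0, false).
Proof.
elim=> //.
- by move=> h []; rewrite /act /= /step.
- by move=> u v _ Hu _ Hv; rewrite act_cat Hu Hv.
- by move=> u _ Hu; rewrite -{1}Hu act_inv_word.
- by move=> u v He _ Hu; rewrite -(weq_act _ _ He).
Qed.

Local Close Scope ring_scope.

Theorem mainTheorem14 :
  weq F_rel (map_word px g_elt) (map_word py g_elt) /\
  (forall n : int, n != 0 -> ~ weq G_rel (wpow g_elt n) [::]) /\
  (forall n : int, n != 0 -> ~ in_subgroup G_rel H_gen (wpow g_elt n)).
Proof.
split; first exact: weq_refl.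
split => n /eqP nz H.
- have := weq_act _ _ H (0%R, false); rewrite act_pow /= => [[]]; rewrite add0r.
  exact: nz.
- have := sub_act _ H; rewrite act_pow => [[]]; rewrite add0r; exact: nz.
Qed.
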